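(* Let $\mathcal{B}(n)$ be the set of pairs $(s,t)\in S_n\times S_n$ whose commutator $[s,t]$ is a $3$-cycle, and $\mathcal{A}(n)\subseteq\mathcal{B}(n)$ the subset of those pairs with $\langle s,t\rangle\in\{A_n,S_n\}$. Then $\#\mathcal{A}(n)/\#\mathcal{B}(n)\to 0$ as $n\to\infty$.
   Context: $[s,t]=sts^{-1}t^{-1}$, with permutations composed as functions. *)

(* Defs.v *)
From HB Require Import structures.
From mathcomp Require Import all_boot all_order all_algebra all_fingroup all_solvable.
Set Implicit Arguments. Unset Strict Implicit. Unset Printing Implicit Defensive.

Local Open Scope group_scope.

(* Paper's commutator [s,t] = s t s^-1 t^-1, composed as functions
   (rightmost applied first).  In MathComp, (p * q) x = q (p x), so the
   function s o t o s^-1 o t^-1 is the MathComp product t^-1 * s^-1 * t * s. *)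
Definition paper_comm n (s t : 'S_n) : 'S_n := t^-1 * s^-1 * t * s.

Definition is_3cycle n (c : 'S_n) : bool :=
  [exists a : 'I_n, exists b : 'I_n, exists d : 'I_n,
    [&& a != b, b != d, a != d,
        (c a == b) && (c b == d) && (c d == a) &
        [forall x : 'I_n, [&& x != a, x != b & x != d] ==> (c x == x)]]].

Definition setB n : {set 'S_n * 'S_n} :=
  [set p | is_3cycle (paper_comm p.1 p.2) ].

Definition setA n : {set 'S_n * 'S_n} :=
  [set p in setB n | (<<[set p.1; p.2]>> == 'Alt_('I_n))
                     || (<<[set p.1; p.2]>> == 'Sym_('I_n))].

(* Main.v *)
Require Import Defs.
From HB Require Import structures.
From mathcomp Require Import all_boot all_order all_algebra all_fingroup all_solvable.
From mathcomp Require Import zify ring lra.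
From Stdlib Require PeanoNat.
Set Implicit Arguments. Unset Strict Implicit. Unset Printing Implicit Defensive.

Module M1.
Local Open Scope group_scope.

Section Basic.
Variable n : nat.
Implicit Types (s t g z c : 'S_n).

Lemma commJ s t g : paper_comm (s ^ g) (t ^ g) = (paper_comm s t) ^ g.
Proof. by rewrite /paper_comm -!conjVg -!conjMg. Qed.

Lemma is3P c : reflect (exists a b d : 'I_n, [/\ a != b, b != d, a != d,
   [/\ c a = b, c b = d & c d = a] &
   forall x, x != a -> x != b -> x != d -> c x = x]) (is_3cycle c).
Proof.
apply: (iffP existsP).
  move=> [a /existsP[b /existsP[d /and5P[ab bd ad /andP[/andP[/eqP h1 /eqP h2] /eqP h3] /forallP h]]]].
  exists a, b, d; split=> // x xa xb xd.
  by apply/eqP; move: (h x); rewrite xa xb xd.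
move=> [a [b [d [ab bd ad [h1 h2 h3] h]]]].
exists a; apply/existsP; exists b; apply/existsP; exists d.
rewrite ab bd ad h1 h2 h3 !eqxx /=; apply/forallP=> x; apply/implyP.
by case/and3P=> xa xb xd; rewrite h.
Qed.

Lemma is3J c g : is_3cycle c -> is_3cycle (c ^ g).
Proof.
case/is3P=> a [b [d [ab bd ad [h1 h2 h3] h]]].
apply/is3P; exists (g a), (g b), (g d); rewrite !(inj_eq perm_inj) ab bd ad.
split=> //; first by rewrite !permJ h1 h2 h3.
move=> x xa xb xd; rewrite -[x](permKV g) permJ h //.
- by apply: contra xa => /eqP <-; rewrite permKV.
- by apply: contra xb => /eqP <-; rewrite permKV.
- by apply: contra xd => /eqP <-; rewrite permKV.
Qed.

Lemma comm_cent s t t0 : paper_comm s t = paper_comm s t0 -> s ^ (t * t0^-1) = s.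
Proof.
rewrite /paper_comm => /(congr1 (fun u => u * s^-1)); rewrite -!mulgA mulgV !mulg1.
move=> E.
have E2 : s^-1 ^ t = s^-1 ^ t0 by rewrite /conjg E.
have : s ^ t = s ^ t0 by rewrite -[s]invgK conjVg E2 -conjVg.
by move=> E3; rewrite conjgM E3 -conjgM mulgV conjg1.
Qed.

Lemma comm_centM s z u : s ^ z = s -> paper_comm s (z * u) = paper_comm s u.
Proof.
move=> E; rewrite /paper_comm invMg.
have E' : (s^-1) ^ z = s^-1 by rewrite conjVg E.
rewrite /conjg in E'.
have -> : u^-1 * z^-1 * s^-1 * (z * u) * s = u^-1 * (z^-1 * s^-1 * z) * u * s.
  by rewrite !mulgA.
by rewrite -(mulgA z^-1) E'.
Qed.

End Basic.

End M1.
Import M1.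

Module M2.
Local Open Scope group_scope.

Section C3.
Variable n : nat.
Definition W3 (c : 'S_n) (p : 'I_n * 'I_n * 'I_n) :=
  let: (a, b, d) := p in
  [&& a != b, b != d, a != d,
        (c a == b) && (c b == d) && (c d == a) &
        [forall x : 'I_n, [&& x != a, x != b & x != d] ==> (c x == x)]].

Lemma is3W c : is_3cycle c -> exists p, W3 c p.
Proof.
case/existsP=> a /existsP[b /existsP[d H]]; by exists (a, b, d).
Qed.

Lemma W3_inj c c' p : W3 c p -> W3 c' p -> c = c'.
Proof.
case: p => [[a b] d] /=.
case/and5P=> ab bd ad /andP[/andP[/eqP h1 /eqP h2] /eqP h3] /forallP h.
case/and5P=> _ _ _ /andP[/andP[/eqP h1' /eqP h2'] /eqP h3'] /forallP h'.
apply/permP=> x.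
case: (eqVneq x a) => [->|xa]; first by rewrite h1 h1'.
case: (eqVneq x b) => [->|xb]; first by rewrite h2 h2'.
case: (eqVneq x d) => [->|xd]; first by rewrite h3 h3'.
by move: (h x) (h' x); rewrite xa xb xd /= => /eqP -> /eqP ->.
Qed.

Definition C3set := [set c : 'S_n | is_3cycle c].

Lemma card_C3 : (#|C3set| <= n.+1 ^ 3)%N.
Proof.
pose f (c : 'S_n) := [pick p | W3 c p].
have inj : {in C3set &, injective f}.
  move=> c c'; rewrite !inE => /is3W[p Hp] /is3W[p' Hp'].
  rewrite /f; case: pickP => [q Hq|]; last by move/(_ p); rewrite Hp.
  case: pickP => [q' Hq'|]; last by move/(_ p'); rewrite Hp'.
  by case=> E; rewrite -E in Hq'; exact: W3_inj Hq Hq'.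
rewrite -(card_in_imset inj).
apply: leq_trans (max_card _) _.
rewrite card_option !card_prod card_ord.
have -> : (n.+1 ^ 3 = n.+1 * n.+1 * n.+1)%N by rewrite !expnS expn0 muln1 mulnA.
nia.
Qed.
End C3.

End M2.
Import M2.

Module M3.
Local Open Scope group_scope.

Section Class.
Variable n : nat.
Implicit Types (s t g : 'S_n) (x y r : 'I_n).

Definition Lo s x := #|porbit s x|.
Definition base s x : 'I_n := [arg min_(y < x in porbit s x) (y : nat)].

Lemma baseP s x : base s x \in porbit s x /\ forall y, y \in porbit s x -> (base s x <= y)%N.
Proof.
rewrite /base; case: arg_minnP => [|i Hi Hmin]; first exact: porbit_id. by [].
Qed.

Lemma porbit_eq s x y : y \in porbit s x -> porbit s y = porbit s x.
Proof. by move=> H; apply/eqP; rewrite eq_porbit_mem. Qed.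

Lemma base_eq s x y : y \in porbit s x -> base s y = base s x.
Proof.
move=> H; have [Py My] := baseP s y; have [Px Mx] := baseP s x.
rewrite (porbit_eq H) in Py My.
apply/val_inj/eqP; rewrite eqn_leq; apply/andP; split; [exact: My | exact: Mx].
Qed.

Lemma base_mem s x : base s x \in porbit s x.
Proof. by case: (baseP s x). Qed.

Lemma base_base s x : base s (base s x) = base s x.
Proof. exact: base_eq (base_mem s x). Qed.

Lemma Lo_eq s x y : y \in porbit s x -> Lo s y = Lo s x.
Proof. by move=> H; rewrite /Lo (porbit_eq H). Qed.

Lemma Lo_base s x : Lo s (base s x) = Lo s x.
Proof. exact: Lo_eq (base_mem s x). Qed.

Lemma Lo_gt0 s x : (0 < Lo s x)%N.
Proof. by rewrite lt0n card_porbit_neq0. Qed.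

Lemma Lo_le s x : (Lo s x <= n)%N.
Proof. by apply: leq_trans (max_card _) _; rewrite card_ord. Qed.

Definition off s x := index x (traject s (base s x) (Lo s x)).

Lemma mem_traj s x : x \in traject s (base s x) (Lo s x).
Proof.
rewrite -Lo_base /Lo -porbit_traject (porbit_eq (base_mem s x)) porbit_id //.
Qed.

Lemma off_lt s x : (off s x < Lo s x)%N.
Proof. by rewrite /off -{2}(size_traject s (base s x) (Lo s x)) index_mem mem_traj. Qed.

Lemma iter_off s x : iter (off s x) s (base s x) = x.
Proof.
rewrite /off -(nth_traject s (off_lt s x)) nth_index //; exact: mem_traj.
Qed.

Lemma index_iter s r k : (k < Lo s r)%N ->
  index (iter k s r) (traject s r (Lo s r)) = k.
Proof.
move=> Hk; rewrite -(nth_traject s Hk) index_uniq ?size_traject //.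
exact: uniq_traject_porbit.
Qed.

Lemma porbit_iter s r k : porbit s (iter k s r) = porbit s r.
Proof. by rewrite -permX porbit_perm. Qed.

Lemma iter_mem s r k : iter k s r \in porbit s r.
Proof. by rewrite -permX mem_porbit. Qed.

Definition rank s x := #|[set r | (base s r == r) && (Lo s r == Lo s x) && (r < base s x)%N]|.
Definition norb s L := #|[set r | (base s r == r) && (Lo s r == L)]|.
Definition code s x := (Lo s x, rank s x, off s x).
Definition next (p : nat * nat * nat) := let: (L, j, k) := p in (L, j, k.+1 %% L).

Lemma code_next s x : code s (s x) = next (code s x).
Proof.
have Hm : s x \in porbit s x by rewrite -[s x]/(iter 1 s x) iter_mem.
rewrite /code /next /rank (Lo_eq Hm) (base_eq Hm); congr (_, _, _).
set b := base s x; set L := Lo s x.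
have Hk := off_lt s x; have Hi := iter_off s x.
rewrite /off (Lo_eq Hm) (base_eq Hm) -/b -/L.
have HL : Lo s b = L by rewrite /b Lo_base.
case: (ltngtP (off s x).+1 L) => H.
- by rewrite -[in LHS]Hi -iterS -HL index_iter ?modn_small // HL.
- by move: H; rewrite ltnS leqNgt Hk.
- rewrite H modnn.
  have -> : s x = b.
    by rewrite -{1}Hi -iterS H -HL /Lo iter_porbit.
  by rewrite -[b in index b _]/(iter 0 s b) -HL index_iter // HL /L Lo_gt0.
Qed.

Lemma base_inj s x y : base s x = x -> base s y = y -> Lo s x = Lo s y ->
  #|[set r | (base s r == r) && (Lo s r == Lo s x) && (r < x)%N]| =
  #|[set r | (base s r == r) && (Lo s r == Lo s y) && (r < y)%N]| -> x = y.
Proof.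
move=> bx by_ Lxy.
wlog lt : x y bx by_ Lxy / (x < y)%N.
  move=> Hw E; case: (ltngtP x y) => H.
  - exact: Hw.
  - by apply/esym/Hw => //; apply/esym.
  - exact: val_inj.
move=> E; exfalso; move: E; apply/eqP; rewrite neq_ltn; apply/orP; left.
apply: proper_card; apply/properP; split.
  apply/subsetP=> r; rewrite !inE -Lxy => /andP[/andP[-> ->] H] /=.
  exact: ltn_trans H lt.
by exists x; rewrite !inE ?bx ?Lxy ?eqxx ?lt //= ltnn.
Qed.

Lemma code_inj s : injective (code s).
Proof.
move=> x y [E1 E2 E3].
have Eb : base s x = base s y.
  apply: (base_inj (base_base s x) (base_base s y)).
    by rewrite !Lo_base.
  move: E2; rewrite /rank !Lo_base E1; exact.
by rewrite -(iter_off s x) -(iter_off s y) E3 Eb.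
Qed.

Lemma rank_lt s x : (rank s x < norb s (Lo s x))%N.
Proof.
apply: proper_card; apply/properP; split.
  by apply/subsetP=> r; rewrite !inE => /andP[/andP[-> ->]].
by exists (base s x); rewrite !inE ?base_base ?Lo_base ?eqxx //= ltnn.
Qed.

Lemma norb_le s L : (norb s L <= n)%N.
Proof. by apply: leq_trans (max_card _) _; rewrite card_ord. Qed.

Lemma rank_le s x : (rank s x <= n)%N.
Proof. by apply: leq_trans (max_card _) _; rewrite card_ord. Qed.

Lemma rank_surj s L j : (j < norb s L)%N ->
  exists r, [/\ base s r = r, Lo s r = L & rank s r = j].
Proof.
move=> Hj.
set RL := [set r | (base s r == r) && (Lo s r == L)].
case Em: (norb s L) Hj => [//|m] Hj.
pose h (r : 'I_n) : 'I_m.+1 := inord (rank s r).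
have hinj : {in RL &, injective h}.
  move=> x y; rewrite !inE => /andP[/eqP bx /eqP Lx] /andP[/eqP by_ /eqP Ly] E.
  have Hx : (rank s x <= m)%N by rewrite -ltnS -Em -Lx rank_lt.
  have Hy : (rank s y <= m)%N by rewrite -ltnS -Em -Ly rank_lt.
  have E' : rank s x = rank s y.
    by move/(congr1 (@nat_of_ord m.+1)): E; rewrite /h !inordK.
  apply: (base_inj bx by_ (etrans Lx (esym Ly))).
  by move: E'; rewrite /rank bx by_.
have HA : h @: RL = [set: 'I_m.+1].
  apply/eqP; rewrite eqEcard subsetT /= card_in_imset // cardsT card_ord.
  by rewrite -Em.
have : (inord j : 'I_m.+1) \in h @: RL by rewrite HA inE.
case/imsetP=> r; rewrite inE => /andP[/eqP br /eqP Lr] E.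
exists r; split=> //.
move/(congr1 (@nat_of_ord m.+1)): E; rewrite /h !inordK // ltnS.
by rewrite -ltnS -Em -Lr rank_lt.
Qed.

Lemma code_surj s s' x : (forall L, norb s L = norb s' L) ->
  exists y, code s' y = code s x.
Proof.
move=> HN.
have Hj : (rank s x < norb s' (Lo s x))%N by rewrite -HN rank_lt.
have [r [br Lr Rr]] := rank_surj Hj.
have Hk := off_lt s x.
exists (iter (off s x) s' r).
have Hm := iter_mem s' r (off s x).
rewrite /code (Lo_eq Hm) Lr; congr (_, _, _).
  by rewrite -Rr /rank (Lo_eq Hm) (base_eq Hm) br.
by rewrite /off (Lo_eq Hm) (base_eq Hm) br index_iter // Lr.
Qed.

Lemma conj_of_norb s s' : (forall L, norb s L = norb s' L) -> exists g, s' = s ^ g.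
Proof.
move=> HN.
pose gf x := odflt x [pick y | code s' y == code s x].
have gP x : code s' (gf x) = code s x.
  rewrite /gf; case: pickP => [y /eqP //|H].
  by have [y Hy] := code_surj x HN; move: (H y); rewrite Hy eqxx.
have ginj : injective gf.
  by move=> x y E; apply: (code_inj (s := s)); rewrite -!gP E.
exists (perm ginj); apply/permP=> y.
rewrite -[y](permKV (perm ginj)); set x := ((perm ginj)^-1)%g y.
rewrite permJ !permE; apply: (code_inj (s := s')).
by rewrite code_next !gP code_next.
Qed.

End Class.

End M3.
Import M3.

Module M4.
Local Open Scope group_scope.

Section Few.
Variable n : nat.
Implicit Types (s t g u v c : 'S_n) (x y : 'I_n).

Lemma porbit_agree u v x : (forall y, y \in porbit u x -> u y = v y) ->
  porbit u x = porbit v x.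
Proof.
move=> H.
have E : forall i, (u ^+ i) x = (v ^+ i) x.
  elim=> [|i IH]; first by rewrite !expg0.
  by rewrite !permX !iterS -!permX H ?mem_porbit // IH.
by apply/setP=> y; apply/porbitP/porbitP => -[i ->]; exists i; rewrite E.
Qed.

Lemma porbitJ u g x : porbit (u ^ g) (g x) = g @: porbit u x.
Proof.
apply/setP=> y; apply/porbitP/imsetP.
  by move=> [i ->]; exists ((u ^+ i) x); rewrite ?mem_porbit // -conjXg permJ.
by move=> [z /porbitP[i ->] ->]; exists i; rewrite -conjXg permJ.
Qed.

Lemma LoJ u g x : Lo (u ^ g) (g x) = Lo u x.
Proof. by rewrite /Lo porbitJ card_imset //; exact: perm_inj. Qed.

Lemma A_few s t : (s, t) \in setA n ->
  exists Lam : seq nat, size Lam = 6 /\ forall x, Lo s x \in Lam.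
Proof.
rewrite inE => /andP[]; rewrite inE /= => /is3P[a [b [d [ab bd ad [h1 h2 h3] hc]]]] Hg.
set c := paper_comm s t in h1 h2 h3 hc.
set s' := s ^ t.
have Es : s = s' * c.
  by rewrite /s' /c /paper_comm /conjg !mulgA !mulgK mulVg mul1g.
set Lam := [:: Lo s a; Lo s b; Lo s d; Lo s' a; Lo s' b; Lo s' d].
exists Lam; split=> //.
set X := [set x | Lo s x \notin Lam].
have sX x : x \in X -> s x \in X.
  rewrite !inE; have Hm : s x \in porbit s x by rewrite -[s x]/(iter 1 s x) iter_mem.
  by rewrite (Lo_eq Hm).
have tX x : x \in X -> t x \in X.
  rewrite !inE => Hx.
  have L1 : Lo s' (t x) = Lo s x by rewrite /s' LoJ.
  have nin z : z \in porbit s' (t x) -> [&& z != a, z != b & z != d].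
    move=> Hz; have E := Lo_eq Hz.
    by apply/and3P; split; apply/negP => /eqP Ez; subst z; move: Hx;
      rewrite -L1 -E eqxx ?orbT.
  have agree : forall y, y \in porbit s' (t x) -> s' y = s y.
    move=> y Hy; have -> : s y = c (s' y) by rewrite {1}Es permM.
    have : s' y \in porbit s' (t x).
      by rewrite -(porbit_eq Hy) -[s' y]/(iter 1 s' y) iter_mem.
    by case/nin/and3P => na nb nd; rewrite hc.
  have L2 : Lo s (t x) = Lo s x by rewrite /Lo -(porbit_agree agree); exact: L1.
  by rewrite L2.
have NX : forall g, g \in 'N(X | 'P) <-> forall x, x \in X -> g x \in X.
  move=> g; split; first by move=> H x Hx; rewrite -(astabs_act x H) in Hx.
  move=> H; rewrite inE; apply/andP; split; first by rewrite inE.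
  rewrite inE; apply/subsetP=> x Hx; rewrite inE /=; exact: H.
have Hsub : <<[set s; t]>> \subset 'N(X | 'P).
  by rewrite gen_subG subUset !sub1set; apply/andP; split; apply/NX.
have HAlt : 'Alt_('I_n) \subset <<[set s; t]>>.
  case/orP: Hg => /eqP ->; first exact: subxx.
  by rewrite /Sym subsetT.
move=> x; apply/negPn/negP => Hx.
have Xx : x \in X by rewrite inE.
have xa : x != a by apply: contra Hx => /eqP ->; rewrite !inE eqxx.
have [e [ex ea]] : exists e, x != e /\ a != e.
  case: (eqVneq x b) => [xb|xb]; last by exists b.
  by exists d; split=> //; rewrite xb.
set g := tperm x a * tperm x e.
have gA : g \in 'Alt_('I_n) by rewrite Alt_even odd_permM !odd_tperm xa ex.
have gN := subsetP Hsub g (subsetP HAlt g gA).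
have := (proj1 (NX g) gN x Xx).
rewrite /g permM tpermL tpermD // 1?eq_sym //.
by rewrite inE !inE eqxx.
Qed.

End Few.

End M4.
Import M4.

Module M5.
Local Open Scope group_scope.

Section Upper.
Variable n : nat.
Implicit Types (s t g : 'S_n) (x y : 'I_n).

Definition lensset s : {set 'I_n.+1} := [set i : 'I_n.+1 | [exists x, Lo s x == i]].
Definition few s := (#|lensset s| <= 6)%N.

Lemma A_few' s t : (s, t) \in setA n -> few s.
Proof.
case/A_few=> Lam [sz HL].
rewrite /few -sz.
have -> : #|lensset s| = size (map (@nat_of_ord _) (enum (lensset s))).
  by rewrite size_map cardE.
apply: uniq_leq_size.
  by rewrite map_inj_uniq ?enum_uniq //; exact: val_inj.
move=> L /mapP[i]; rewrite mem_enum inE => /existsP[x /eqP <-] ->.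
exact: HL.
Qed.

Definition phiT := {ffun 'I_6 -> 'I_n.+1 * 'I_n.+1}.
Definition phi s : phiT :=
  [ffun i : 'I_6 => let L := nth ord0 (enum (lensset s)) i in (L, inord (norb s L))].

Lemma norb0 s L : ~~ [exists x, Lo s x == L] -> norb s L = 0.
Proof.
move=> H; apply: eq_card0 => r; rewrite !inE.
apply/negP => /andP[_ /eqP E]; move/negP: H; apply; apply/existsP; exists r.
by rewrite E.
Qed.

Lemma phi_norb1 s s' L : few s -> phi s = phi s' -> [exists x, Lo s x == L] ->
  norb s L = norb s' L.
Proof.
move=> fs E /existsP[x /eqP Ex].
have HL : (L < n.+1)%N by rewrite ltnS -Ex Lo_le.
set i0 : 'I_n.+1 := inord L.
have vi0 : nat_of_ord i0 = L by rewrite /i0 inordK.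
have mi0 : i0 \in enum (lensset s).
  by rewrite mem_enum inE; apply/existsP; exists x; rewrite vi0 Ex.
have Hk : (index i0 (enum (lensset s)) < 6)%N.
  apply: leq_trans (fs); by rewrite cardE index_mem.
have := congr1 (fun f : phiT => f (Ordinal Hk)) E.
rewrite !ffunE /= nth_index // => -[E1 E2].
by move/(congr1 (@nat_of_ord _)): E2; rewrite -E1 !inordK ?ltnS ?norb_le // vi0.
Qed.

Lemma phi_norb s s' : few s -> few s' -> phi s = phi s' -> forall L, norb s L = norb s' L.
Proof.
move=> fs fs' E L.
case: (boolP [exists x, Lo s x == L]) => H1; first exact: phi_norb1 H1.
case: (boolP [exists x, Lo s' x == L]) => H2; first exact/esym/(phi_norb1 fs' (esym E) H2).
by rewrite !norb0.
Qed.

Definition rep (tau : phiT) : 'S_n := odflt 1 [pick s0 | few s0 && (phi s0 == tau)].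
Definition gc s : 'S_n := odflt 1 [pick g | s == rep (phi s) ^ g].
Definition t0 s c : 'S_n := odflt 1 [pick t | paper_comm s t == c].

Lemma repP s : few s -> few (rep (phi s)) /\ phi (rep (phi s)) = phi s.
Proof.
move=> fs; rewrite /rep; case: pickP => [s0 /andP[f0 /eqP ->] //|H].
by move: (H s); rewrite fs eqxx.
Qed.

Lemma gcP s : few s -> s = rep (phi s) ^ gc s.
Proof.
move=> fs; have [f0 e0] := repP fs.
have [g Hg] := conj_of_norb (phi_norb f0 fs e0).
rewrite /gc; case: pickP => [g' /eqP //|H].
by move: (H g); rewrite -Hg eqxx.
Qed.

Lemma t0P s t : paper_comm s (t0 s (paper_comm s t)) = paper_comm s t.
Proof.
rewrite /t0; case: pickP => [t' /eqP //|H].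
by move: (H t); rewrite eqxx.
Qed.

Definition psi (p : 'S_n * 'S_n) : 'S_n * phiT * 'S_n :=
  (paper_comm p.1 p.2, phi p.1,
   gc p.1 * (p.2 * (t0 p.1 (paper_comm p.1 p.2))^-1)).

Lemma psi_s s t : few s -> rep (phi s) ^ (psi (s, t)).2 = s.
Proof.
move=> fs; rewrite /psi /= conjgM -gcP //.
by apply: comm_cent; rewrite t0P.
Qed.

Lemma upper : (#|setA n| <= n.+1 ^ 3 * ((n.+1 * n.+1) ^ 6) * n`!)%N.
Proof.
have inj : {in setA n &, injective psi}.
  move=> [s t] [s' t'] H H' E.
  have fs := A_few' H; have fs' := A_few' H'.
  have Es : s = s'.
    have h1 := psi_s t fs; have h2 := psi_s t' fs'.
    rewrite E in h1.
    have Ep : phi s = phi s' by move: E; rewrite /psi => -[].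
    by apply: etrans (esym h1) _; rewrite Ep; exact h2.
  subst s'.
  move: E; rewrite /psi /= => -[Ec Ew].
  by rewrite Ec in Ew; move/mulgI/mulIg: Ew => ->.
rewrite -(card_in_imset inj).
have sub : psi @: setA n \subset setX (setX (C3set n) [set: phiT]) [set: 'S_n].
  apply/subsetP=> _ /imsetP[[s t] H ->]; rewrite !inE /= !andbT.
  by move: H; rewrite !inE => /andP[].
apply: leq_trans (subset_leq_card sub) _.
rewrite !cardsX !cardsT card_ffun !card_prod !card_ord card_Sn.
by rewrite leq_mul2r leq_mul2r card_C3 !orbT.
Qed.

End Upper.

End M5.
Import M5.

Module M6.

Fixpoint brb (ls : seq (nat * bool)) (x : nat) : nat :=
  match ls with
  | [::] => x
  | (L, be) :: ls' => if x < L then (if be then x.+1 %% L else x) else L + brb ls' (x - L)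
  end.

Definition sumL (ls : seq (nat * bool)) := sumn (map fst ls).

Lemma brb_ge ls x : sumL ls <= x -> brb ls x = x.
Proof.
elim: ls x => [//|[L be] ls IH] x /=; rewrite /sumL /= => H.
rewrite ltnNge (leq_trans (leq_addr _ _) H) /= IH; first by rewrite subnKC // (leq_trans (leq_addr _ _) H).
by rewrite leq_subRL // (leq_trans (leq_addr _ _) H).
Qed.

Lemma brb_lt ls x : x < sumL ls -> brb ls x < sumL ls.
Proof.
elim: ls x => [//|[L be] ls IH] x /=; rewrite /sumL /= => H.
case: (ltnP x L) => HL.
  case: be; last by rewrite ltn_addr.
  by rewrite ltn_addr // ltn_mod; case: (L) HL.
by rewrite ltn_add2l IH // -(ltn_add2l L) subnKC.
Qed.

Lemma brb_inj ls : injective (brb ls).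
Proof.
elim: ls => [//|[L be] ls IH] x y /=.
case: (ltnP x L) => Hx; case: (ltnP y L) => Hy.
- case: be => // E.
  have L0 : 0 < L by case: L Hx {Hy E}.
  have : x.+1 == y.+1 %[mod L] by rewrite E.
  by rewrite -[x.+1]addn1 -[y.+1]addn1 eqn_modDr !modn_small // => /eqP.
- move=> E; exfalso; move: E; case: be => E.
    by have := ltn_pmod x.+1 (leq_ltn_trans (leq0n _) Hx); rewrite E ltnNge leq_addr.
  by move: Hx; rewrite E ltnNge leq_addr.
- move=> E; exfalso; move: E; case: be => E.
    by have := ltn_pmod y.+1 (leq_ltn_trans (leq0n _) Hy); rewrite -E ltnNge leq_addr.
  by move: Hy; rewrite -E ltnNge leq_addr.
- move/addnI/IH => E.
  by rewrite -(subnKC Hx) -(subnKC Hy) E.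
Qed.

Lemma iter_brb L be ls k x :
  iter k (brb ((L, be) :: ls)) x =
  if x < L then (if be then (x + k) %% L else x) else L + iter k (brb ls) (x - L).
Proof.
case: be; elim: k => [|k IH].
- rewrite /=; case: ifP => H; first by rewrite addn0 modn_small.
  by rewrite subnKC // leqNgt H.
- rewrite iterS IH; case: ifP => H.
    have L0 : 0 < L by case: (L) H.
    rewrite /= ltn_mod L0 -[((x + k) %% L).+1]addn1 modnDml -addnA addn1 //.
  by rewrite /= ltnNge leq_addr /= addKn.
- rewrite /=; case: ifP => H //; by rewrite subnKC // leqNgt H.
- rewrite iterS IH; case: ifP => H /=; first by rewrite H.
  by rewrite ltnNge leq_addr /= addKn.
Qed.

Definition fc ls m := count (fun x => iter m (brb ls) x == x) (iota 0 (sumL ls)).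

Definition Tf m (p : nat * bool) := if p.2 && ~~ (p.1 %| m) then 0 else p.1.

Lemma fcE ls m : fc ls m = sumn (map (Tf m) ls).
Proof.
elim: ls => [//|[L be] ls IH].
rewrite /fc /sumL /= iotaD count_cat -/(sumL ls) add0n -[in iota L _](addn0 L) iotaDl count_map /=.
congr (_ + _); last first.
  rewrite -IH /fc; apply: eq_count => x /=.
  rewrite iter_brb ltnNge leq_addr /= addKn eqn_add2l //.
rewrite /Tf /=.
have -> : count (fun x => iter m (brb ((L, be) :: ls)) x == x) (iota 0 L) =
          count (fun x => ~~ be || (L %| m)) (iota 0 L).
  apply: eq_in_count => x; rewrite mem_iota add0n => /andP[_ Hx].
  rewrite iter_brb Hx; case: be => /=; last by rewrite eqxx.
  rewrite -{2}(modn_small Hx).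
  by rewrite -{2}[x]addn0 eqn_modDl mod0n.
case: be => /=.
  case: (L %| m) => /=; first by rewrite count_predT size_iota.
  by rewrite count_pred0.
by rewrite count_predT size_iota.
Qed.

End M6.
Import M6.

Module M7.
Local Open Scope group_scope.

Lemma card_set_count (T : finType) (P : pred T) : #|[set x | P x]| = count P (enum T).
Proof.
rewrite cardsE cardE /enum_mem size_filter -enumT.
by rewrite (@eq_filter _ _ predT) ?filter_predT.
Qed.

Section Fam.
Variables n k : nat.

Definition lst (b : k.-tuple bool) : seq (nat * bool) :=
  (3, true) :: [seq (4 + j, nth false b j) | j <- iota 0 k].
Definition Mk := 3 + sumn [seq 4 + j | j <- iota 0 k].

Lemma sumL_lst b : sumL (lst b) = Mk.
Proof. by rewrite /sumL /= -map_comp. Qed.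

Hypothesis hM : (Mk <= n)%N.

Lemma brb_lt_n b (x : 'I_n) : (brb (lst b) x < n)%N.
Proof.
case: (ltnP x Mk) => H.
  by apply: leq_trans hM; rewrite -(sumL_lst b) brb_lt // sumL_lst.
by rewrite brb_ge ?sumL_lst.
Qed.

Definition rf b (x : 'I_n) : 'I_n := insubd x (brb (lst b) x).

Lemma rf_val b x : val (rf b x) = brb (lst b) x.
Proof. by rewrite val_insubd brb_lt_n. Qed.

Lemma rf_inj b : injective (rf b).
Proof. by move=> x y /(congr1 val); rewrite !rf_val => /brb_inj /val_inj. Qed.

Definition r b : 'S_n := perm (@rf_inj b).

Lemma rX b m (x : 'I_n) : val ((r b ^+ m) x) = iter m (brb (lst b)) x.
Proof.
rewrite permX; elim: m => [//|m IH].
by rewrite !iterS /r permE rf_val IH.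
Qed.

Definition fixc (g : 'S_n) m := #|[set x | (g ^+ m) x == x]|.

Lemma fixcJ g h m : fixc (g ^ h) m = fixc g m.
Proof.
rewrite /fixc -conjXg.
have -> : [set x | ((g ^+ m) ^ h) x == x] = h @: [set x | (g ^+ m) x == x].
  apply/setP=> y; rewrite -[y](permKV h) (mem_imset _ _ (@perm_inj _ h)) !inE.
  by rewrite permJ (inj_eq perm_inj).
by rewrite card_imset //; exact: perm_inj.
Qed.

Lemma fixc_r b m : fixc (r b) m = fc (lst b) m + (n - Mk).
Proof.
rewrite /fixc card_set_count.
have -> : count (fun x : 'I_n => (r b ^+ m) x == x) (enum 'I_n) =
          count (fun x => iter m (brb (lst b)) x == x) (map val (enum 'I_n)).
  rewrite count_map; apply: eq_count => x /=.
  by rewrite -rX -val_eqE.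
rewrite val_enum_ord -(subnKC hM) iotaD count_cat add0n /fc sumL_lst; congr (_ + _).
rewrite subnKC //.
rewrite (@eq_in_count _ _ predT) ?count_predT ?size_iota //.
move=> x; rewrite mem_iota => /andP[Hx _].
have E : forall j, iter j (brb (lst b)) x = x.
  by elim=> [//|j IH]; rewrite iterS IH brb_ge // sumL_lst.
by rewrite /= E eqxx.
Qed.

End Fam.

End M7.
Import M7.

Module M8.

Section NonConj.
Variable k : nat.
Implicit Types b : k.-tuple bool.

Definition Fb b m j := if nth false b j && ((4 + j) %| m) then 4 + j else 0.

Lemma fc_lst b m : fc (lst b) m =
  Tf m (3, true) + (\sum_(0 <= j < k) Tf 1 (4 + j, nth false b j) + \sum_(0 <= j < k) Fb b m j).
Proof.
rewrite fcE /lst /= -big_split /=; congr (_ + _).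
rewrite -map_comp sumnE big_map /index_iota subn0 /=; apply: eq_bigr => j _.
rewrite /Tf /Fb /=; case: (nth false b j) => /=; last by rewrite addn0.
by case: (_ %| m).
Qed.

Lemma D_eq b b' : (forall m, fc (lst b) m = fc (lst b') m) ->
  forall m, \sum_(0 <= j < k) Fb b m j = \sum_(0 <= j < k) Fb b' m j.
Proof.
move=> H m.
have H1 := H 1; rewrite !fc_lst in H1.
have Hm := H m; rewrite !fc_lst in Hm.
move/addnI: H1; move/addnI: Hm.
have E1 : forall b0, \sum_(0 <= j < k) Fb b0 1 j = 0.
  move=> b0; rewrite big1 // => j _; rewrite /Fb dvdn1.
  by case: (nth false b0 j).
rewrite !E1 !addn0 => Hm H1; by move: Hm; rewrite H1 => /addnI.
Qed.

Lemma nonconj b b' : (forall m, fc (lst b) m = fc (lst b') m) -> b = b'.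
Proof.
move=> H; have D := D_eq H.
have step : forall j, j < k -> (forall i, i < j -> nth false b i = nth false b' i) ->
    nth false b j = nth false b' j.
  move=> j jk IH.
  have Dj := D (4 + j).
  have split_ : forall b0, \sum_(0 <= i < k) Fb b0 (4 + j) i =
      \sum_(0 <= i < j) Fb b0 (4 + j) i + Fb b0 (4 + j) j.
    move=> b0.
    have Z : \sum_(j.+1 <= i < k) Fb b0 (4 + j) i = 0.
      rewrite big_nat_cond big1 // => i /andP[/andP[Hi _] _].
      rewrite /Fb; case: (nth false b0 i) => //=.
      case: ifP => // /dvdn_leq; rewrite addn_gt0 /= => /(_ isT).
      by rewrite leq_add2l leqNgt Hi.
    by rewrite (@big_cat_nat _ _ _ j.+1) // big_nat_recr // Z; apply: addn0.
  rewrite !split_ in Dj.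
  have Es : \sum_(0 <= i < j) Fb b (4 + j) i = \sum_(0 <= i < j) Fb b' (4 + j) i.
    by apply: eq_big_nat => i /andP[_ Hi]; rewrite /Fb IH.
  move: Dj; rewrite Es => /addnI; rewrite /Fb dvdnn !andbT.
  by case: (nth false b j); case: (nth false b' j).
have all_ : forall j, j <= k -> forall i, i < j -> nth false b i = nth false b' i.
  elim=> [//|j IH] jk i; rewrite ltnS leq_eqVlt => /orP[/eqP ->|]; last first.
    by apply: IH; apply: ltnW.
  by apply: step => //; apply: IH; apply: ltnW.
apply: val_inj; apply: (@eq_from_nth _ false); first by rewrite !size_tuple.
by move=> i; rewrite size_tuple => Hi; apply: (all_ k).
Qed.

End NonConj.

End M8.
Import M8.

Module M9.
Local Open Scope group_scope.

Section Lower.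
Variables n k : nat.
Hypothesis hM : (Mk k <= n)%N.

Lemma hn : (2 < n)%N.
Proof. by apply: leq_trans hM; rewrite /Mk leq_addr. Qed.

Definition p2 : 'I_n := Ordinal hn.
Definition p0 : 'I_n := insubd p2 0.
Definition p1 : 'I_n := insubd p2 1%N.
Lemma vp0 : nat_of_ord p0 = 0%N.
Proof. by change (val p0 = 0%N); rewrite val_insubd (ltn_trans _ hn). Qed.
Lemma vp1 : nat_of_ord p1 = 1%N.
Proof. by change (val p1 = 1%N); rewrite val_insubd (ltn_trans _ hn). Qed.
Lemma vp2 : nat_of_ord p2 = 2%N. Proof. by []. Qed.

Lemma rv b x : nat_of_ord (r hM b x) = brb (lst b) x.
Proof. rewrite /r permE; exact: rf_val. Qed.

Lemma rsmall b (x : 'I_n) : (x < 3)%N -> nat_of_ord (r hM b x) = x.+1 %% 3.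
Proof. by move=> H; rewrite rv /lst /= H. Qed.

Lemma rbig b (x : 'I_n) : (3 <= x)%N -> (3 <= r hM b x)%N.
Proof.
move=> H; rewrite rv /lst /=; case: ifP => H'; last exact: leq_addr.
by move: H; rewrite leqNgt H'.
Qed.

Lemma neqo (x y : 'I_n) : nat_of_ord x != nat_of_ord y -> x != y.
Proof. by apply: contra => /eqP ->. Qed.

Definition ttp : 'S_n := tperm p0 p2.

Lemma comm_r3 b : is_3cycle (paper_comm (r hM b) ttp).
Proof.
set r0 := r hM b.
have n01 : p0 != p1 by apply: neqo; rewrite vp0 vp1.
have n02 : p0 != p2 by apply: neqo; rewrite vp0 vp2.
have n12 : p1 != p2 by apply: neqo; rewrite vp1 vp2.
have n21 : p2 != p1 by apply: neqo; rewrite vp1 vp2.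
have n10 : p1 != p0 by apply: neqo; rewrite vp0 vp1.
have n20 : p2 != p0 by apply: neqo; rewrite vp0 vp2.
have e0 : r0 p0 = p1 by apply: ord_inj; rewrite rsmall vp0 ?vp1.
have e1 : r0 p1 = p2 by apply: ord_inj; rewrite rsmall vp1 ?vp2.
have e2 : r0 p2 = p0 by apply: ord_inj; rewrite rsmall vp2 ?vp0.
have i1 : r0^-1 p1 = p0 by rewrite -e0 permK.
have i2 : r0^-1 p2 = p1 by rewrite -e1 permK.
have i0 : r0^-1 p0 = p2 by rewrite -e2 permK.
apply/is3P; exists p0, p2, p1; split=> //.
  rewrite /paper_comm /ttp !permM tpermV; split.
  - by rewrite tpermL i2 (tpermD n01 n21) e1.
  - by rewrite tpermR i0 tpermR e0.
  - by rewrite (tpermD n01 n21) i1 tpermL e2.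
move=> x x0 x2 x1.
have big : (3 <= x)%N.
  rewrite leqNgt; apply/negP => H.
  have : (x == p0) || (x == p1) || (x == p2).
    rewrite -!(inj_eq (@ord_inj n)) vp0 vp1 vp2.
    by case: (nat_of_ord x) H => [|[|[|]]].
  by rewrite (negbTE x0) (negbTE x1) (negbTE x2).
have tx : forall y : 'I_n, (3 <= y)%N -> ttp y = y.
  move=> y Hy; rewrite /ttp tpermD //.
    by apply/negP => /eqP E; move: Hy; rewrite -E vp0.
  by apply/negP => /eqP E; move: Hy; rewrite -E vp2.
have by_ : (3 <= (r0^-1 x : 'I_n))%N.
  rewrite leqNgt; apply/negP => H.
  have := rsmall b H; rewrite -/r0 permKV => E.
  by move: big; rewrite E ltnNge -ltnS ltn_mod.
rewrite /paper_comm /ttp !permM tpermV -/ttp tx // tx //.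
by rewrite permKV.
Qed.

Definition gl b (s : 'S_n) : 'S_n := odflt 1 [pick g | s == r hM b ^ g].

Lemma glP b w : r hM b ^ w = r hM b ^ gl b (r hM b ^ w).
Proof.
rewrite /gl; case: pickP => [g /eqP //|H].
by move: (H w); rewrite eqxx.
Qed.

Definition chi (p : k.-tuple bool * 'S_n) : 'S_n * 'S_n :=
  let: (b, w) := p in
  let s := r hM b ^ w in let g := gl b s in (s, (g^-1 * w) * (ttp ^ g)).

Lemma chi_in p : chi p \in setB n.
Proof.
case: p => b w; rewrite inE /=.
set s := r hM b ^ w; set g := gl b s.
have Es : s = r hM b ^ g by rewrite /s /g -glP.
have Hz : s ^ (g^-1 * w) = s by rewrite {1}Es -conjgM mulKVg.
rewrite comm_centM // Es commJ; exact/is3J/comm_r3.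
Qed.

Lemma chi_inj : injective chi.
Proof.
move=> [b w] [b' w'] /= [E1 E2].
have Eb : b = b'.
  apply: nonconj => m.
  have : r hM b' = r hM b ^ (w * w'^-1) by rewrite conjgM E1 -conjgM mulgV conjg1.
  move=> E; apply: (@addIn (n - Mk k)).
  by rewrite -!fixc_r E fixcJ.
subst b'; rewrite E1 in E2.
by move/mulIg/mulgI: E2 => ->.
Qed.

Lemma lower : (2 ^ k * n`! <= #|setB n|)%N.
Proof.
have := subset_leq_card (_ : chi @: [set: k.-tuple bool * 'S_n] \subset setB n).
rewrite card_imset; last exact: chi_inj.
rewrite cardsT card_prod card_tuple card_bool card_Sn; apply.
by apply/subsetP=> _ /imsetP[p _ ->]; exact: chi_in.
Qed.

End Lower.

End M9.
Import M9.

Module M10.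
Import Order.TTheory GRing.Theory Num.Theory.

Lemma Mk_succ k : Mk k.+1 = (Mk k + (4 + k))%N.
Proof.
rewrite /Mk; have -> : iota 0 k.+1 = iota 0 k ++ [:: k] by rewrite -addn1 iotaD.
rewrite map_cat sumn_cat /=; lia.
Qed.

Lemma Mk_le k : (8 <= k)%N -> (Mk k <= k * k)%N.
Proof.
elim: k => [//|k IH]; rewrite leq_eqVlt => /orP[/eqP <-|H]; first by [].
rewrite Mk_succ; have := IH H; lia.
Qed.

Lemma key (D k n : nat) : (0 < D)%N -> (31 * (D * 31 ^ 30) <= k)%N ->
  (n < k.+1 * k.+1)%N -> (D * n.+1 ^ 15 < 2 ^ k)%N.
Proof.
move=> D0 Hk Hn.
set q := k %/ 31.
have hq : (D * 31 ^ 30 <= q)%N by rewrite leq_divRL // mulnC.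
have hk : (k.+1 <= 31 * q.+1)%N.
  have := divn_eq k 31; have := ltn_pmod k (isT : (0 < 31)%N); rewrite -/q; lia.
have h1 : (n.+1 ^ 15 <= 31 ^ 30 * q.+1 ^ 30)%N.
  apply: (@leq_trans ((k.+1 * k.+1) ^ 15)); first by rewrite leq_exp2r.
  have -> : ((k.+1 * k.+1) ^ 15 = k.+1 ^ 30)%N by rewrite mulnn -expnM.
  by rewrite -expnMn leq_exp2r.
have h2g : forall C, (D * C <= q)%N -> (D * (C * q.+1 ^ 30) < q.+1 ^ 31)%N.
  move=> C hC; rewrite mulnA (expnS q.+1 30) ltn_mul2r; apply/andP; split.
    by rewrite expn_gt0.
  by rewrite ltnS.
have h2 := h2g _ hq.
have h3 : (q.+1 ^ 31 <= 2 ^ k)%N.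
  apply: (@leq_trans (2 ^ (q * 31))).
    by rewrite expnM leq_exp2r // ltn_expl.
  by rewrite leq_pexp2l // leq_trunc_div.
apply: leq_ltn_trans (leq_mul (leqnn D) h1) _.
exact: leq_trans h2 h3.
Qed.

End M10.
Import M10.

Import Order.TTheory GRing.Theory Num.Theory.
Local Open Scope ring_scope.

Lemma fin_ineq (eps a b d : rat) : 0 < eps -> 1 <= eps * d -> 0 <= a -> a * d < b ->
  a < eps * b.
Proof.
move=> h3 h2 h4 h1.
have h5 : 0 <= a * (eps * d - 1).
  by apply: mulr_ge0; [exact: h4 | rewrite subr_ge0; exact: h2].
have h6 : 0 < eps * (b - a * d).
  by apply: mulr_gt0; [exact: h3 | rewrite subr_gt0; exact: h1].
nra.
Qed.

Theorem mainTheorem20 :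
  forall eps : rat, 0 < eps ->
  exists N : nat, forall n : nat, (N <= n)%N ->
    (#|setA n|%:R / #|setB n|%:R : rat) < eps.
Proof.
move=> eps he.
set D := `|denq eps|%N.
have D0 : (0 < D)%N by rewrite absz_gt0 denq_neq0.
have hD : 1 <= eps * (D%:R : rat).
  have -> : (D%:R : rat) = (denq eps)%:~R.
    by rewrite /D -[in RHS](gez0_abs (ltW (denq_gt0 eps))).
  by rewrite -numqE ler1z -gtz0_ge1 numq_gt0.
have [K HK] : exists K, K = (31 * (D * 31 ^ 30))%N by eexists.
exists ((K + 8) * (K + 8))%N => n Hn.
set k := Nat.sqrt n.
have [sq1 sq2] := PeanoNat.Nat.sqrt_spec n (le_0_n n).
have hk1 : (k * k <= n)%N by apply/ssrnat.leP.
have hk2 : (n < k.+1 * k.+1)%N by apply/ssrnat.ltP.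
have hKk : (K + 8 <= k)%N.
  rewrite leqNgt; apply/negP => H.
  have : (k.+1 * k.+1 <= (K + 8) * (K + 8))%N by apply: leq_mul.
  move=> H2; move: (leq_trans (leq_trans hk2 H2) Hn); by rewrite ltnn.
have hM : (Mk k <= n)%N.
  by apply: leq_trans hk1; apply: Mk_le; apply: leq_trans hKk; rewrite leq_addl.
have low := lower hM.
have up := upper n.
have e15 : (n.+1 ^ 3 * (n.+1 * n.+1) ^ 6 = n.+1 ^ 15)%N by rewrite mulnn -expnM -expnD.
rewrite e15 in up.
have hK' : (31 * (D * 31 ^ 30) <= k)%N.
  by rewrite -HK; apply: leq_trans hKk; rewrite leq_addr.
have kk := @key D k n D0 hK' hk2.
have hAB : (#|setA n| * D < #|setB n|)%N.
  apply: (leq_ltn_trans (leq_mul up (leqnn D))).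
  apply: (leq_trans _ low).
  by rewrite mulnAC ltn_pmul2r ?fact_gt0 // mulnC.
have hB : (0 < #|setB n|)%N by apply: leq_trans low; rewrite muln_gt0 expn_gt0 fact_gt0.
have hABr : (#|setA n|%:R * (D%:R : rat)) < #|setB n|%:R by rewrite -natrM ltr_nat.
have hBr : (0 : rat) < #|setB n|%:R by rewrite ltr0n.
have hAr : (0 : rat) <= #|setA n|%:R by rewrite ler0n.
rewrite ltr_pdivrMr //.
exact: fin_ineq he hD hAr hABr.
Qed.
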